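(* Let $G=(g_{ij})$ be a Hermitian $4\times4$ matrix with $g_{ii}=0$, $g_{12}=g_{23}=g_{34}=1$, $|g_{13}|=1$, $g_{14}\ne0$, $g_{24}\ne0$ and $\det G=0$. If $\mathrm{Re}(g_{13})\le0$ and $\mathrm{Re}(g_{24}\overline{g}_{14})\le0$, then $\mathrm{Re}(g_{13}\overline{g}_{14})\le0$ and $\mathrm{Re}(\overline{g}_{24})\le0$. *)

(* Defs.v *)
From mathcomp Require Import all_boot all_order all_algebra.
From mathcomp Require Export complex.
From mathcomp Require Export reals.
Set Implicit Arguments. Unset Strict Implicit. Unset Printing Implicit Defensive.
Import Order.TTheory GRing.Theory Num.Theory.
Local Open Scope ring_scope.

Definition hermitian_mx (R : realType) n (G : 'M[R[i]]_n) : Prop :=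
  forall i j, G j i = conjc (G i j).

(* Main.v *)
Require Import Defs.
From mathcomp Require Import all_boot all_order all_algebra.
From mathcomp Require Import complex reals.
From mathcomp Require Import ring lra.
Import Order.TTheory GRing.Theory Num.Theory.
Local Open Scope ring_scope.

Definition M4 {R : comNzRingType} (a A b B c C : R) (i j : nat) : R :=
  match i, j with
  | 0, 1 | 1, 0 | 1, 2 | 2, 1 | 2, 3 | 3, 2 => 1
  | 0, 2 => a | 2, 0 => A | 0, 3 => b | 3, 0 => B | 1, 3 => c | 3, 1 => C
  | _, _ => 0 end.

Lemma det4 (R : comNzRingType) (a A b B c C : R) (G : 'M[R]_4) :
  (forall i j : 'I_4, G i j = M4 a A b B c C i j) ->
  \det G = 1 + a*A*c*C + b*B - B - b - c*A - a*C - a*c*B - b*C*A.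
Proof.
move=> E.
rewrite (expand_det_row _ ord0) !big_ord_recl big_ord0 /cofactor.
rewrite !(expand_det_row _ ord0) !big_ord_recl !big_ord0 /cofactor.
rewrite !(expand_det_row _ ord0) !big_ord_recl !big_ord0 /cofactor.
rewrite !det_mx11 !mxE !E /= /bump /=.
ring.
Qed.

Lemma ordK k (H : (k < 4)%N) : Ordinal H = inord k :> 'I_4.
Proof. by apply/val_inj; rewrite /= inordK. Qed.

Lemma realpart (R : realFieldType) (p q r s u v : R) :
  1 +
  (((p * p - q * - q) * u - (p * - q + q * p) * v) * u -
   ((p * p - q * - q) * v + (p * - q + q * p) * u) * - v) +
  (r * r - s * - s) - r - r - (u * p - v * - q) - 
  (p * u - q * - v) - ((p * u - q * v) * r - (p * v + q * u) * - s) -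
  ((r * u - s * - v) * p - (r * - v + s * u) * - q) = 0 ->
  p * p - q * - q = 1 ->
  p <= 0 -> u * r - v * - s <= 0 -> p * r - q * - s <= 0 /\ u <= 0.
Proof.
move=> D U hp hcb.
have H0 : (p * p - q * (- q) - 1) * (u ^+ 2 + v ^+ 2 - 1 - r ^+ 2 - s ^+ 2 + 2 * r) = 0.
  by rewrite U subrr mul0r.
have Hid : (u - p - (p * r + q * s)) ^+ 2 + (v - q - (p * s - q * r)) ^+ 2 = 4 * p * (p * r + q * s).
  lra.
have Hsq : 0 <= 4 * p * (p * r + q * s) by rewrite -Hid addr_ge0 // sqr_ge0.
have hx : p * r + q * s <= 0.
  have [hp0|hp0] := ltrP p 0.
    rewrite -mulrA pmulr_rge0 // in Hsq.
    rewrite leNgt; apply/negP => hx.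
    have : p * (p * r + q * s) < 0 by rewrite nmulr_rlt0.
    lra.
  have p0 : p = 0 by apply/eqP; rewrite eq_le hp hp0.
  subst p.
  rewrite mulr0 mul0r in Hid.
  move/eqP: Hid; rewrite paddr_eq0 ?sqr_ge0 // !sqrf_eq0 => /andP[/eqP h1 /eqP h2].
  have hu : u = q * s by lra.
  have hv : v = q - q * r by lra.
  rewrite hu hv in hcb.
  have -> : 0 * r + q * s = q * s * r - (q - q * r) * - s by ring.
  exact: hcb.
split; first lra.
set x := p * r + q * s in Hid hx *.
set d := u - p - x in Hid.
have hd : d ^+ 2 <= 4 * p * x by rewrite -Hid lerDl sqr_ge0.
have hu : u = d + p + x by rewrite /d; ring.
rewrite hu leNgt; apply/negP => hlt.
have h1 : - p - x < d by lra.
have h2 : 0 <= - p - x by lra.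
have h3 : (- p - x) ^+ 2 < d ^+ 2.
  by rewrite ltrXn2r.
have h4 : (- p - x) ^+ 2 - 4 * p * x = (p - x) ^+ 2 by ring.
have h5 : 0 <= (p - x) ^+ 2 := sqr_ge0 _.
lra.
Qed.

Theorem corollary3p1 (R : realType) (G : 'M[R[i]]_4) :
  hermitian_mx G ->
  (forall k : 'I_4, G k k = 0) ->
  G (inord 0) (inord 1) = 1 ->
  G (inord 1) (inord 2) = 1 ->
  G (inord 2) (inord 3) = 1 ->
  `|G (inord 0) (inord 2)| = 1 ->
  G (inord 0) (inord 3) != 0 ->
  G (inord 1) (inord 3) != 0 ->
  \det G = 0 ->
  Re (G (inord 0) (inord 2)) <= 0 ->
  Re (G (inord 1) (inord 3) * conjc (G (inord 0) (inord 3))) <= 0 ->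
  Re (G (inord 0) (inord 2) * conjc (G (inord 0) (inord 3))) <= 0 /\
  Re (conjc (G (inord 1) (inord 3))) <= 0.
Proof.
move=> hH hD h01 h12 h23 hn _ _ hdet.
have E : forall i j : 'I_4, G i j = M4 (G (inord 0) (inord 2)) (conjc (G (inord 0) (inord 2)))
   (G (inord 0) (inord 3)) (conjc (G (inord 0) (inord 3)))
   (G (inord 1) (inord 3)) (conjc (G (inord 1) (inord 3))) i j.
  move=> i j; case: i => [[|[|[|[|k]]]] Hi] //; case: j => [[|[|[|[|l]]]] Hj] //;
  rewrite ?hD //= !ordK ?h01 ?h12 ?h23 //;
  rewrite hH ?h01 ?h12 ?h23 ?conjc1 //.
rewrite (@det4 _ _ _ _ _ _ _ _ E) in hdet.
have hu : G (inord 0) (inord 2) * conjc (G (inord 0) (inord 2)) = 1.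
  by rewrite -sqr_normc hn expr1n.
move: hdet hu; clear -R.
case: (G (inord 0) (inord 2)) => p q.
case: (G (inord 0) (inord 3)) => r s.
case: (G (inord 1) (inord 3)) => u v.
move=> /(congr1 (@complex.Re R)) /= D /(congr1 (@complex.Re R)) /= U.
rewrite -!complexRe !lecE /= !eqxx /=.
exact: realpart.
Qed.
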